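(* Let $\Lambda=(W_j,\Lambda_j,v_j)_{j\in\mathbb{J}}$ be a g-fusion frame for $H$ with g-fusion frame operator $S_\Lambda$, let $\mathbb{I}\subseteq\mathbb{J}$, $\mathbb{I}^c=\mathbb{J}\setminus\mathbb{I}$, and for $\mathbb{K}\subseteq\mathbb{J}$ set $S_{\mathbb{K}}f:=\sum_{j\in\mathbb{K}}v_j^2\pi_{W_j}\Lambda_j^*\Lambda_j\pi_{W_j}f$. Then for every $f\in H$, $$\sum_{j\in\mathbb{I}}v_j^2\Vert\Lambda_j\pi_{W_j}f\Vert^2+\Vert S_{\Lambda}^{-\frac{1}{2}}S_{\mathbb{I}^c}f\Vert^2=\sum_{j\in\mathbb{I}^c}v_j^2\Vert\Lambda_j\pi_{W_j}f\Vert^2+\Vert S_{\Lambda}^{-\frac{1}{2}}S_{\mathbb{I}}f\Vert^2.$$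
   Context: $H$ is a separable Hilbert space, $\mathbb{J}\subseteq\mathbb{Z}$, $\{H_j\}_{j\in\mathbb{J}}$ are separable Hilbert spaces, $\Lambda_j\in\mathcal{B}(H,H_j)$, $W_j$ are closed subspaces of $H$, $v_j>0$, and $\pi_V$ denotes the orthogonal projection onto a closed subspace $V$. The triple $\Lambda=(W_j,\Lambda_j,v_j)$ is a g-fusion frame for $H$ if there exist $0<A\le B<\infty$ with $A\Vert f\Vert^2\le\sum_{j\in\mathbb{J}}v_j^2\Vert\Lambda_j\pi_{W_j}f\Vert^2\le B\Vert f\Vert^2$ for all $f\in H$. Its g-fusion frame operator $S_\Lambda f=\sum_{j\in\mathbb{J}}v_j^2\pi_{W_j}\Lambda_j^*\Lambda_j\pi_{W_j}f$ is bounded, positive and invertible, and $S_\Lambda^{-1/2}$ is the inverse of its positive square root. *)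

(* Defs.v *)
From HB Require Import structures.
From mathcomp Require Import all_boot all_order all_algebra.
From mathcomp Require Import reals.
From mathcomp Require Import complex.
From Stdlib Require Import ClassicalEpsilon.

Set Implicit Arguments.
Unset Strict Implicit.
Unset Printing Implicit Defensive.

Import Order.TTheory GRing.Theory Num.Theory.
Local Open Scope ring_scope.

Section Hilbert.
Variable R : realType.
Local Notation C := (complex R).

Section Space.
Variable V : lmodType C.
Variable ip : V -> V -> C.

Definition is_inner_product : Prop :=
  [/\ forall (a : C) (x y z : V), ip (a *: x + y) z = a * ip x z + ip y z,
      forall x y : V, ip y x = conjc (ip x y),
      forall x : V, 0 <= ip x x
    & forall x : V, ip x x = 0 -> x = 0].

Definition hnorm (x : V) : R := Num.sqrt (complex.Re (ip x x)).

Definition cauchy_seq (u : nat -> V) : Prop :=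
  forall e : R, 0 < e -> exists N : nat, forall m n : nat,
    (N <= m)%N -> (N <= n)%N -> hnorm (u m - u n) < e.

Definition seq_converges_to (u : nat -> V) (l : V) : Prop :=
  forall e : R, 0 < e -> exists N : nat, forall n : nat,
    (N <= n)%N -> hnorm (u n - l) < e.

Definition complete_space : Prop :=
  forall u : nat -> V, cauchy_seq u -> exists l : V, seq_converges_to u l.

Definition separable_space : Prop :=
  exists d : nat -> V, forall (x : V) (e : R), 0 < e ->
    exists n : nat, hnorm (x - d n) < e.

Definition separable_hilbert : Prop :=
  [/\ is_inner_product, complete_space & separable_space].

Definition closed_subspace (W : V -> Prop) : Prop :=
  [/\ W 0,
      forall (a : C) (x y : V), W x -> W y -> W (a *: x + y)
    & forall (u : nat -> V) (l : V),
        (forall n, W (u n)) -> seq_converges_to u l -> W l].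

Definition is_orth_proj (W : V -> Prop) (P : V -> V) : Prop :=
  forall f : V, W (P f) /\ (forall w : V, W w -> ip (f - P f) w = 0).

(* unconditional convergence of a family indexed by K ⊆ Z:
   the net of finite partial sums over finite subsets of K converges *)
Definition has_sumV (K : int -> Prop) (u : int -> V) (s : V) : Prop :=
  forall e : R, 0 < e -> exists F0 : seq int,
    (forall j, j \in F0 -> K j) /\
    forall F : seq int, uniq F -> (forall j, j \in F -> K j) ->
      {subset F0 <= F} -> hnorm (\sum_(j <- F) u j - s) < e.

(* the sum \sum_{j in K} u j (0 if the family is not summable) *)
Definition sumV (K : int -> Prop) (u : int -> V) : V :=
  match excluded_middle_informative (exists s, has_sumV K u s) with
  | left h => proj1_sig (constructive_indefinite_description _ h)
  | right _ => 0
  end.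

Definition positive_op (Q : V -> V) : Prop :=
  forall x : V, 0 <= ip (Q x) x.
End Space.

Definition bounded_linear (V1 V2 : lmodType C) (ip1 : V1 -> V1 -> C)
    (ip2 : V2 -> V2 -> C) (T : V1 -> V2) : Prop :=
  [/\ forall (a : C) (x y : V1), T (a *: x + y) = a *: T x + T y
    & exists M : R, forall x : V1, hnorm ip2 (T x) <= M * hnorm ip1 x].

Definition is_adjoint (V1 V2 : lmodType C) (ip1 : V1 -> V1 -> C)
    (ip2 : V2 -> V2 -> C) (T : V1 -> V2) (Ts : V2 -> V1) : Prop :=
  forall (x : V1) (y : V2), ip2 (T x) y = ip1 x (Ts y).

Definition has_sumR (K : int -> Prop) (a : int -> R) (s : R) : Prop :=
  forall e : R, 0 < e -> exists F0 : seq int,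
    (forall j, j \in F0 -> K j) /\
    forall F : seq int, uniq F -> (forall j, j \in F -> K j) ->
      {subset F0 <= F} -> `|\sum_(j <- F) a j - s| < e.

Definition sumR (K : int -> Prop) (a : int -> R) : R :=
  match excluded_middle_informative (exists s, has_sumR K a s) with
  | left h => proj1_sig (constructive_indefinite_description _ h)
  | right _ => 0
  end.

Section GFusion.
Variable H : lmodType C.
Variable ipH : H -> H -> C.
Variable Hj : int -> lmodType C.
Variable ipj : forall j, Hj j -> Hj j -> C.
Variable J : int -> Prop.
Variable P : int -> H -> H.            (* P j = pi_{W_j} *)
Variable L : forall j, H -> Hj j.      (* L j = Lambda_j *)
Variable Ls : forall j, Hj j -> H.     (* Ls j = Lambda_j^* *)
Variable v : int -> R.

Definition gfusion_frame : Prop :=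
  exists A B : R, 0 < A /\ A <= B /\
    forall f : H, exists s : R,
      has_sumR J (fun j => v j ^+ 2 * hnorm (@ipj j) (L j (P j f)) ^+ 2) s
      /\ A * hnorm ipH f ^+ 2 <= s /\ s <= B * hnorm ipH f ^+ 2.

Definition S_K (K : int -> Prop) (f : H) : H :=
  sumV ipH K (fun j => ((v j ^+ 2)%:C)%C *: P j (@Ls j (L j (P j f)))).
End GFusion.

End Hilbert.

(* Main.v *)
Require Import Defs.
From HB Require Import structures.
From mathcomp Require Import all_boot all_order all_algebra.
From mathcomp Require Import reals complex.
From mathcomp Require Import ring lra.
From Stdlib Require Import ClassicalEpsilon.
Set Implicit Arguments.
Unset Strict Implicit.
Unset Printing Implicit Defensive.
Import Order.TTheory GRing.Theory Num.Theory.
Local Open Scope ring_scope.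

Section IP.
Variable R : realType.
Local Notation C := (complex R).
Variable V : lmodType C.
Variable ip : V -> V -> C.
Hypothesis hip : is_inner_product ip.

Lemma ipDZl a x y z : ip (a *: x + y) z = a * ip x z + ip y z.
Proof. by case: hip => H1 H2 H3 H4; apply: H1. Qed.
Lemma ipJ x y : ip y x = conjc (ip x y).
Proof. by case: hip => H1 H2 H3 H4; apply: H2. Qed.
Lemma ip_ge0 x : 0 <= ip x x.
Proof. by case: hip => H1 H2 H3 H4; apply: H3. Qed.
Lemma ip_eq0 x : ip x x = 0 -> x = 0.
Proof. by case: hip => H1 H2 H3 H4; apply: H4. Qed.

Lemma ipDl x y z : ip (x + y) z = ip x z + ip y z.
Proof. by rewrite -[x]scale1r ipDZl mul1r scale1r. Qed.
Lemma ip0l z : ip 0 z = 0.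
Proof. by apply: (@addrI _ (ip 0 z)); rewrite -ipDl !addr0. Qed.
Lemma ipZl a x z : ip (a *: x) z = a * ip x z.
Proof. by rewrite -[a *: x]addr0 ipDZl ip0l addr0. Qed.
Lemma ipNl x z : ip (- x) z = - ip x z.
Proof. by rewrite -scaleN1r ipZl mulN1r. Qed.
Lemma ipBl x y z : ip (x - y) z = ip x z - ip y z.
Proof. by rewrite ipDl ipNl. Qed.
Lemma ipDr x y z : ip z (x + y) = ip z x + ip z y.
Proof. by rewrite ipJ ipDl rmorphD (ipJ x z) (ipJ y z). Qed.
Lemma ipZr a x z : ip z (a *: x) = conjc a * ip z x.
Proof. by rewrite ipJ ipZl rmorphM (ipJ x z). Qed.
Lemma ip0r z : ip z 0 = 0.
Proof. by rewrite ipJ ip0l rmorph0. Qed.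
Lemma ipNr x z : ip z (- x) = - ip z x.
Proof. by rewrite ipJ ipNl rmorphN (ipJ x z). Qed.

Lemma ReJ (c : C) : complex.Re (conjc c) = complex.Re c.
Proof. by case: c. Qed.
Lemma ImJ (c : C) : complex.Im (conjc c) = - complex.Im c.
Proof. by case: c. Qed.

Lemma Re_ipC x y : complex.Re (ip x y) = complex.Re (ip y x).
Proof. by rewrite ipJ ReJ. Qed.

Lemma Im_ipxx x : complex.Im (ip x x) = 0.
Proof. exact: ger0_Im (ip_ge0 x). Qed.
Lemma Re_ipxx_ge0 x : 0 <= complex.Re (ip x x).
Proof. by have := ip_ge0 x; rewrite lecE => /andP[]. Qed.

Lemma hnorm_ge0 x : 0 <= hnorm ip x.
Proof. exact: sqrtr_ge0. Qed.
Lemma hnorm_sq x : hnorm ip x ^+ 2 = complex.Re (ip x x).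
Proof. by rewrite /hnorm sqr_sqrtr // Re_ipxx_ge0. Qed.
Lemma ipxxE x : ip x x = ((hnorm ip x ^+ 2)%:C)%C.
Proof.
rewrite hnorm_sq; have := Im_ipxx x; case: (ip x x) => a b /= ->.
by rewrite complexr0.
Qed.
Lemma hnorm_eq0 x : hnorm ip x = 0 -> x = 0.
Proof.
move=> h; apply: ip_eq0; rewrite ipxxE h expr2 mulr0 //.
Qed.
Lemma hnormN x : hnorm ip (- x) = hnorm ip x.
Proof. by rewrite /hnorm ipNl ipNr opprK. Qed.
Lemma hnormB x y : hnorm ip (x - y) = hnorm ip (y - x).
Proof. by rewrite -hnormN opprB. Qed.
Lemma hnorm0 : hnorm ip 0 = 0.
Proof. by rewrite /hnorm ip0l sqrtr0. Qed.

Lemma ReM_real (r : R) (c : C) : complex.Re ((r%:C)%C * c) = r * complex.Re c.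
Proof. by case: c => a b /=; rewrite mul0r subr0. Qed.

Lemma Re_ipDD x y :
  complex.Re (ip (x + y) (x + y)) =
  complex.Re (ip x x) + 2 * complex.Re (ip x y) + complex.Re (ip y y).
Proof.
rewrite ipDl !ipDr !raddfD /= (Re_ipC y x); ring.
Qed.

Lemma Re_ipZZ (r s : R) x y :
  complex.Re (ip ((r%:C)%C *: x) ((s%:C)%C *: y)) = r * s * complex.Re (ip x y).
Proof.
rewrite ipZl ipZr ReM_real.
rewrite conjc_real ReM_real; ring.
Qed.

Lemma CS_Re x y : complex.Re (ip x y) <= hnorm ip x * hnorm ip y.
Proof.
set na := hnorm ip x; set nb := hnorm ip y.
have hna : 0 <= na by apply: hnorm_ge0.
have hnb : 0 <= nb by apply: hnorm_ge0.
have := Re_ipxx_ge0 ((nb%:C)%C *: x + ((- na)%:C)%C *: y).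
rewrite Re_ipDD !Re_ipZZ -!hnorm_sq -/na -/nb => H.
have H2 : na * nb * complex.Re (ip x y) <= (na * nb) ^+ 2.
  rewrite -subr_ge0; move: H; set c := complex.Re _.
  have -> : nb * nb * na ^+ 2 + 2 * (nb * - na * c) + - na * - na * nb ^+ 2
     = 2 * ((na * nb) ^+ 2 - na * nb * c) by ring.
  by rewrite pmulr_rge0.
have [h0|hpos] := eqVneq (na * nb) 0.
  move: h0 => /eqP; rewrite mulf_eq0 => /orP[] /eqP h0.
    by rewrite (hnorm_eq0 h0) ip0l h0 mul0r.
  by rewrite (hnorm_eq0 h0) ip0r h0 mulr0.
have hp : 0 < na * nb by rewrite lt_def hpos mulr_ge0.
by rewrite expr2 in H2; rewrite -(ler_pM2l hp).
Qed.

Lemma CS_absRe x y : `|complex.Re (ip x y)| <= hnorm ip x * hnorm ip y.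
Proof.
rewrite ler_norml CS_Re andbT lerNl -ReJ.
have -> : - complex.Re (conjc (ip x y)) = complex.Re (ip y (- x)).
  by rewrite ipNr -ipJ raddfN.
by rewrite -(hnormN x) mulrC CS_Re.
Qed.

Lemma hnormD x y : hnorm ip (x + y) <= hnorm ip x + hnorm ip y.
Proof.
rewrite -(ler_sqr (x := hnorm ip (x+y))) ?nnegrE ?addr_ge0 ?hnorm_ge0 //.
rewrite hnorm_sq Re_ipDD -!hnorm_sq.
have := CS_Re x y.
move=> h; rewrite sqrrD; rewrite lerD2r; rewrite lerD2l.
by rewrite mulr_natl mulr2n lerD.
Qed.


Lemma ip_sum (I : Type) (F : seq I) (u : I -> V) z :
  ip (\sum_(j <- F) u j) z = \sum_(j <- F) ip (u j) z.
Proof.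
elim: F => [|a F IH]; first by rewrite !big_nil ip0l.
by rewrite !big_cons ipDl IH.
Qed.

Lemma hnorm_small0 x : (forall e : R, 0 < e -> hnorm ip x < e) -> x = 0.
Proof.
move=> h; apply: hnorm_eq0; apply/eqP; rewrite eq_le hnorm_ge0 andbT.
case: (lerP (hnorm ip x) 0) => // hp.
by have := h _ hp; rewrite ltxx.
Qed.

Lemma hnorm_lt2 x y e : hnorm ip x < e / 2 -> hnorm ip y < e / 2 ->
  hnorm ip (x + y) < e.
Proof.
move=> hx hy; apply: (le_lt_trans (hnormD x y)).
by rewrite [e](splitr e) ltrD.
Qed.

Lemma has_sumV_uniq K u s1 s2 :
  has_sumV ip K u s1 -> has_sumV ip K u s2 -> s1 = s2.
Proof.
move=> h1 h2; apply/eqP; rewrite -subr_eq0; apply/eqP; apply: hnorm_small0.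
move=> e he; have he2 : 0 < e / 2 by rewrite divr_gt0.
have [F1 [K1 H1]] := h1 _ he2; have [F2 [K2 H2]] := h2 _ he2.
set F := undup (F1 ++ F2).
have uF : uniq F by apply: undup_uniq.
have KF : forall j, j \in F -> K j.
  by move=> j; rewrite mem_undup mem_cat => /orP[/K1|/K2].
have s1F : {subset F1 <= F} by move=> j hj; rewrite mem_undup mem_cat hj.
have s2F : {subset F2 <= F} by move=> j hj; rewrite mem_undup mem_cat hj orbT.
have := H1 F uF KF s1F; have := H2 F uF KF s2F.
move=> a b; have -> : s1 - s2 = (\sum_(j <- F) u j - s2) + - (\sum_(j <- F) u j - s1).
  by rewrite opprB [RHS]addrC addrA subrK.
by apply: hnorm_lt2; rewrite ?hnormN.
Qed.

Lemma sumV_eq K u s : has_sumV ip K u s -> sumV ip K u = s.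
Proof.
move=> h; rewrite /sumV; case: excluded_middle_informative => [e|n].
  case: constructive_indefinite_description => t ht /=.
  exact: has_sumV_uniq ht h.
by exfalso; apply: n; exists s.
Qed.

Definition pb (K : int -> Prop) (j : int) : bool :=
  if excluded_middle_informative (K j) then true else false.
Lemma pbP K j : pb K j <-> K j.
Proof. by rewrite /pb; case: excluded_middle_informative. Qed.

Lemma sum_split_sub (F A : seq int) (u : int -> V) :
  uniq F -> uniq A -> {subset A <= F} ->
  \sum_(j <- F) u j = \sum_(j <- A) u j + \sum_(j <- [seq j <- F | j \notin A]) u j.
Proof.
move=> uF uA sAF; rewrite (bigID (fun j => j \in A)) /= big_filter.
congr (_ + _).
rewrite -big_filter; apply: perm_big; apply: uniq_perm => //.
  exact: filter_uniq.
by move=> j; rewrite mem_filter; case hj: (j \in A) => //=; rewrite sAF.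
Qed.

Lemma sum_bipart (F : seq int) (P : pred int) (u : int -> V) :
  \sum_(j <- F) u j =
  \sum_(j <- [seq j <- F | P j]) u j + \sum_(j <- [seq j <- F | ~~ P j]) u j.
Proof. by rewrite (bigID P) !big_filter. Qed.

Lemma has_sumV_split (J I Ic : int -> Prop) u a b :
  (forall j, J j <-> I j \/ Ic j) -> (forall j, I j -> Ic j -> False) ->
  has_sumV ip I u a -> has_sumV ip Ic u b -> has_sumV ip J u (a + b).
Proof.
move=> hJ hD h1 h2 e he; have he2 : 0 < e / 2 by rewrite divr_gt0.
have [F1 [K1 H1]] := h1 _ he2; have [F2 [K2 H2]] := h2 _ he2.
exists (F1 ++ F2); split.
  by move=> j; rewrite mem_cat => /orP[/K1|/K2] h; apply/hJ; [left|right].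
move=> F uF KF sF.
rewrite (sum_bipart F (pb I)).
have -> : forall p q : V, p + q - (a + b) = (p - a) + (q - b).
  by move=> p q; rewrite opprD addrACA.
apply: hnorm_lt2.
  apply: H1; first exact: filter_uniq.
    by move=> j; rewrite mem_filter => /andP[/pbP].
  by move=> j hj; rewrite mem_filter; apply/andP; split;
    [apply/pbP; apply: K1 | apply: sF; rewrite mem_cat hj].
apply: H2; first exact: filter_uniq.
  move=> j; rewrite mem_filter => /andP[hn /KF /hJ [hI|//]].
  by move/negP: hn; case; apply/pbP.
move=> j hj; rewrite mem_filter; apply/andP; split.
  by apply/negP => /pbP hI; apply: (hD j hI (K2 j hj)).
by apply: sF; rewrite mem_cat hj orbT.
Qed.

Definition epsn (n : nat) : R := (n.+1%:R)^-1.
Lemma epsn_gt0 n : 0 < epsn n.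
Proof. by rewrite /epsn invr_gt0 ltr0Sn. Qed.
Lemma epsn_small e : 0 < e -> exists N, epsn N < e.
Proof.
move=> he; exists (Num.Def.archi_bound e^-1).
have hi : 0 < e^-1 by rewrite invr_gt0.
have h := archi_boundP (ltW hi).
rewrite /epsn invf_plt ?posrE ?ltr0Sn //.
apply: (lt_trans h); rewrite ltr_nat; exact: ltnSn.
Qed.

Lemma has_sumV_cauchy (J I : int -> Prop) u s :
  (forall j, I j -> J j) -> has_sumV ip J u s ->
  forall e, 0 < e -> exists D : seq int, (forall j, j \in D -> I j) /\
    forall G : seq int, uniq G -> (forall j, j \in G -> I j) ->
      (forall j, j \in G -> j \notin D) -> hnorm ip (\sum_(j <- G) u j) < e.
Proof.
move=> hIJ h e he; have he2 : 0 < e / 2 by rewrite divr_gt0.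
have [F0 [K0 H0]] := h _ he2.
exists [seq j <- undup F0 | pb I j]; split.
  by move=> j; rewrite mem_filter => /andP[/pbP].
move=> G uG KG dG.
have uF : uniq (undup F0 ++ G).
  rewrite cat_uniq undup_uniq uG andbT /=; apply/hasPn => j hj.
  apply/negP => hF; have := dG j hj; rewrite mem_filter hF andbT.
  by move/negP; apply; apply/pbP; apply: KG.
have := H0 _ uF; have := H0 _ (undup_uniq F0).
move=> H1 H2.
have H2' : hnorm ip (\sum_(j <- undup F0 ++ G) u j - s) < e / 2.
  apply: H2.
    by move=> j; rewrite mem_cat mem_undup => /orP[/K0|/KG/hIJ].
  by move=> j hj; rewrite mem_cat mem_undup hj.
rewrite big_cat /= in H2'.
have E : forall A G0 s0 : V, G0 = (A + G0 - s0) + - (A - s0).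
  by move=> A G0 s0; rewrite opprB addrA subrK addrC addKr.
rewrite {1}(E (\sum_(j <- undup F0) u j) (\sum_(j <- G) u j) s).
apply: hnorm_lt2; first exact: H2'.
rewrite hnormN; apply: H1; first by move=> j; rewrite mem_undup => /K0.
by move=> j; rewrite mem_undup.
Qed.
Lemma has_sumV_sub (J I : int -> Prop) u s :
  complete_space ip -> (forall j, I j -> J j) -> has_sumV ip J u s ->
  exists t, has_sumV ip I u t.
Proof.
move=> hcomp hIJ h.
have hc := has_sumV_cauchy hIJ h.
pose Pd (n : nat) (D : seq int) := (forall j, j \in D -> I j) /\
    forall G : seq int, uniq G -> (forall j, j \in G -> I j) ->
      (forall j, j \in G -> j \notin D) -> hnorm ip (\sum_(j <- G) u j) < epsn n.
have hd : forall n, exists D, Pd n D by move=> n; apply: hc; apply: epsn_gt0.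
pose d n := proj1_sig (constructive_indefinite_description _ (hd n)).
have dP : forall n, Pd n (d n).
  by move=> n; rewrite /d; case: constructive_indefinite_description.
pose E n := undup (flatten [seq d k | k <- iota 0 n.+1]).
have E1 : forall n, uniq (E n) by move=> n; apply: undup_uniq.
have E2 : forall n j, j \in E n -> I j.
  move=> n j; rewrite mem_undup => /flattenP [D /mapP [k _ ->]].
  exact: (dP k).1.
have E3 : forall k n, (k <= n)%N -> {subset d k <= E n}.
  move=> k n hk j hj; rewrite mem_undup; apply/flattenP; exists (d k) => //.
  by apply: map_f; rewrite mem_iota add0n ltnS.
have Key : forall N n F, (N <= n)%N -> uniq F -> (forall j, j \in F -> I j) ->
    {subset E n <= F} ->
    hnorm ip (\sum_(j <- F) u j - \sum_(j <- E n) u j) < epsn N.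
  move=> N n F hN uF KF sF.
  rewrite (sum_split_sub u uF (E1 n) sF) addrC addKr.
  apply: (dP N).2; first exact: filter_uniq.
    by move=> j; rewrite mem_filter => /andP[_ /KF].
  move=> j; rewrite mem_filter => /andP[hj _]; apply/negP => hd'.
  by move/negP: hj; apply; apply: (E3 N n hN).
pose sq n := \sum_(j <- E n) u j.
have cs : cauchy_seq ip sq.
  move=> e he; have [N hN] := epsn_small he; exists N => m n hm hn.
  case: (leqP n m) => hnm.
    apply: (lt_trans _ hN); apply: (Key N n (E m)) => //; first exact: E2.
    move=> j; rewrite !mem_undup => /flattenP [D /mapP [k hk ->]] hj.
    apply/flattenP; exists (d k) => //; apply: map_f.
    move: hk; rewrite !mem_iota !add0n !ltnS => hk; exact: leq_trans hk hnm.
  rewrite hnormB; apply: (lt_trans _ hN); apply: (Key N m (E n)) => //; first exact: E2.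
  move=> j; rewrite !mem_undup => /flattenP [D /mapP [k hk ->]] hj.
  apply/flattenP; exists (d k) => //; apply: map_f.
  move: hk; rewrite !mem_iota !add0n !ltnS => hk; apply: leq_trans hk (ltnW hnm).
have [l hl] := hcomp _ cs.
exists l => e he; have he2 : 0 < e / 2 by rewrite divr_gt0.
have [N1 hN1] := epsn_small he2; have [N2 hN2] := hl _ he2.
exists (E (maxn N1 N2)); split; first exact: E2.
move=> F uF KF sF.
have -> : \sum_(j <- F) u j - l =
   (\sum_(j <- F) u j - sq (maxn N1 N2)) + (sq (maxn N1 N2) - l).
  by rewrite addrA subrK.
apply: hnorm_lt2; last by apply: hN2; apply: leq_maxr.
by apply: (lt_trans _ hN1); apply: Key => //; apply: leq_maxl.
Qed.

End IP.

Section RealSum.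
Variable R : realType.

Lemma has_sumR_uniq (K : int -> Prop) (a : int -> R) s1 s2 :
  has_sumR K a s1 -> has_sumR K a s2 -> s1 = s2.
Proof.
move=> h1 h2; apply/eqP; rewrite -subr_eq0 -normr_eq0; apply/eqP.
apply/eqP; rewrite eq_le normr_ge0 andbT.
case: (lerP `|s1 - s2| 0) => // hp.
have he2 : 0 < `|s1 - s2| / 2 by rewrite divr_gt0.
have [F1 [K1 H1]] := h1 _ he2; have [F2 [K2 H2]] := h2 _ he2.
set F := undup (F1 ++ F2).
have uF : uniq F by apply: undup_uniq.
have KF : forall j, j \in F -> K j.
  by move=> j; rewrite mem_undup mem_cat => /orP[/K1|/K2].
have s1F : {subset F1 <= F} by move=> j hj; rewrite mem_undup mem_cat hj.
have s2F : {subset F2 <= F} by move=> j hj; rewrite mem_undup mem_cat hj orbT.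
have A := H1 F uF KF s1F; have B := H2 F uF KF s2F.
have E : s1 - s2 = (\sum_(j <- F) a j - s2) - (\sum_(j <- F) a j - s1).
  by rewrite opprB [RHS]addrC addrA subrK.
have : `|s1 - s2| < `|s1 - s2|.
  rewrite {1}E; apply: (le_lt_trans (ler_normB _ _)).
  by apply: (lt_le_trans (ltrD B A)); rewrite -splitr.
by rewrite ltxx.
Qed.

Lemma sumR_eq K (a : int -> R) s : has_sumR K a s -> sumR K a = s.
Proof.
move=> h; rewrite /sumR; case: excluded_middle_informative => [e|n].
  case: constructive_indefinite_description => t ht /=.
  exact: has_sumR_uniq ht h.
by exfalso; apply: n; exists s.
Qed.
End RealSum.

Section Frame.
Variable R : realType.
Local Notation C := (complex R).
Variables (H : lmodType C) (ipH : H -> H -> C) (Hj : int -> lmodType C)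
  (ipj : forall j : int, Hj j -> Hj j -> C) (J : int -> Prop)
  (W : int -> H -> Prop) (P : int -> H -> H)
  (L : forall j : int, H -> Hj j) (Ls : forall j : int, Hj j -> H)
  (v : int -> R).
Hypothesis hipH : is_inner_product ipH.
Hypothesis hipj : forall j, J j -> is_inner_product (@ipj j).
Hypothesis hP : forall j, J j -> is_orth_proj ipH (W j) (P j).
Hypothesis hadj : forall j, J j -> is_adjoint ipH (@ipj j) (L j) (@Ls j).

Definition uu f j := ((v j ^+ 2)%:C)%C *: P j (@Ls j (L j (P j f))).
Definition aa f j := v j ^+ 2 * hnorm (@ipj j) (L j (P j f)) ^+ 2.

Lemma orth_sa j w f : J j -> ipH (P j w) f = ipH w (P j f).
Proof.
move=> hj; have [Wf hf] := hP hj f; have [Ww hw] := hP hj w.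
have -> : ipH (P j w) f = ipH (P j w) (P j f) + ipH (P j w) (f - P j f).
  by rewrite -(ipDr hipH) addrC subrK.
have -> : ipH w (P j f) = ipH (P j w) (P j f) + ipH (w - P j w) (P j f).
  by rewrite -(ipDl hipH) addrC subrK.
by rewrite (hw _ Wf) (ipJ hipH (f - P j f) (P j w)) (hf _ Ww) rmorph0.
Qed.

Lemma term_ip j f : J j -> ipH (uu f j) f = ((aa f j)%:C)%C.
Proof.
move=> hj; rewrite /uu /aa (ipZl hipH) orth_sa // (ipJ hipH) -hadj //.
rewrite (ipxxE (hipj hj)) conjc_real.
by rewrite -rmorphM.
Qed.

Lemma sum_ip F f : (forall j, j \in F -> J j) ->
  ipH (\sum_(j <- F) uu f j) f = ((\sum_(j <- F) aa f j)%:C)%C.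
Proof.
move=> hF; rewrite (ip_sum hipH) rmorph_sum; apply: eq_big_seq => j hj.
by apply: term_ip; apply: hF.
Qed.

Lemma hsR K f x : (forall j, K j -> J j) -> has_sumV ipH K (uu f) x ->
  has_sumR K (aa f) (complex.Re (ipH x f)).
Proof.
move=> hK hx e he.
have hf1 : 0 < hnorm ipH f + 1 by rewrite ltr_wpDl ?hnorm_ge0.
have he' : 0 < e / (hnorm ipH f + 1) by rewrite divr_gt0.
have [F0 [K0 H0]] := hx _ he'; exists F0; split => // F uF KF sF.
have H1 := H0 F uF KF sF.
have -> : \sum_(j <- F) aa f j - complex.Re (ipH x f) =
    complex.Re (ipH (\sum_(j <- F) uu f j - x) f).
  by rewrite (ipBl hipH) raddfB /= sum_ip // => j /KF /hK.
apply: (le_lt_trans (CS_absRe hipH _ _)).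
apply: (le_lt_trans (y := hnorm ipH (\sum_(j <- F) uu f j - x) * (hnorm ipH f + 1))).
  by rewrite ler_wpM2l ?hnorm_ge0 // lerDl.
by rewrite -ltr_pdivlMr.
Qed.

End Frame.

Lemma Im_iM (R : realType) (w : complex R) : complex.Im ('i%C * w) = complex.Re w.
Proof. by case: w => a b /=; rewrite !mul0r !mul1r add0r. Qed.
Lemma Im_ciM (R : realType) (w : complex R) :
  complex.Im (conjc 'i%C * w) = - complex.Re w.
Proof. by case: w => a b /=; rewrite !mul0r add0r mulN1r. Qed.
Lemma Im_iciM (R : realType) (w : complex R) :
  complex.Im ('i%C * (conjc 'i%C * w)) = complex.Im w.
Proof. by case: w => a b /=; ring. Qed.

Theorem theorem3p3
  (R : realType)
  (H : lmodType (complex R)) (ipH : H -> H -> complex R)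
  (Hj : int -> lmodType (complex R))
  (ipj : forall j : int, Hj j -> Hj j -> complex R)
  (J : int -> Prop)
  (W : int -> H -> Prop) (P : int -> H -> H)
  (L : forall j : int, H -> Hj j) (Ls : forall j : int, Hj j -> H)
  (v : int -> R)
  (Q Qi : H -> H)
  (I : int -> Prop) :
  separable_hilbert ipH ->
  (forall j, J j -> separable_hilbert (@ipj j)) ->
  (forall j, J j -> closed_subspace ipH (W j)) ->
  (forall j, J j -> is_orth_proj ipH (W j) (P j)) ->
  (forall j, J j -> bounded_linear ipH (@ipj j) (L j)) ->
  (forall j, J j -> is_adjoint ipH (@ipj j) (L j) (@Ls j)) ->
  (forall j, J j -> 0 < v j) ->
  gfusion_frame ipH ipj J P L v ->
  bounded_linear ipH ipH Q ->
  positive_op ipH Q ->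
  (forall f, Q (Q f) = S_K ipH P L Ls v J f) ->
  (forall f, Qi (Q f) = f) -> (forall f, Q (Qi f) = f) ->
  (forall j, I j -> J j) ->
  let Ic := fun j => J j /\ ~ I j in
  forall f : H,
    sumR I (fun j => v j ^+ 2 * hnorm (@ipj j) (L j (P j f)) ^+ 2)
      + hnorm ipH (Qi (S_K ipH P L Ls v Ic f)) ^+ 2
    = sumR Ic (fun j => v j ^+ 2 * hnorm (@ipj j) (L j (P j f)) ^+ 2)
      + hnorm ipH (Qi (S_K ipH P L Ls v I f)) ^+ 2.
Proof.
move=> [hipH hcomp _] hHj _ hP hL hadj _ _ [hQlin _] hQpos hQQ hQiQ hQQi hIJ Ic f.
have hipj : forall j, J j -> is_inner_product (@ipj j) by move=> j /hHj [].
have QD : forall x y, Q (x + y) = Q x + Q y.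
  move=> x y. have := hQlin 1 x y. rewrite scale1r scale1r. done.
have Q0 : Q 0 = 0.
  by apply: (@addrI _ (Q 0)); rewrite -QD !addr0.
have hJs : forall g, exists s, has_sumV ipH J (uu P L Ls v g) s.
  move=> g; case: (excluded_middle_informative (exists s, has_sumV ipH J (uu P L Ls v g) s)) => [//|hn].
  exfalso; apply: (hn); exists 0.
  have hS : S_K ipH P L Ls v J g = 0.
    rewrite /S_K /sumV; case: excluded_middle_informative => [h|//].
    by exfalso; apply: hn; exact: h.
  have g0 : g = 0.
    by rewrite -(hQiQ g) -(hQiQ (Q g)) hQQ hS -Q0 hQiQ -{1}Q0 hQiQ.
  move=> e he; exists [::]; split => // F uF KF _.
  rewrite big_seq big1 ?subr0 ?hnorm0 // => j /KF hj.
  rewrite /uu g0.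
  have [_ hp] := hP j hj 0.
  have P0 : P j 0 = 0.
    apply: (hnorm_eq0 hipH); apply/eqP; rewrite -sqrf_eq0 hnorm_sq //.
    have := hp _ (proj1 (hP j hj 0)); rewrite sub0r (ipNl hipH) => /eqP.
    by rewrite oppr_eq0 => /eqP ->.
  have L0 : L j 0 = 0.
    case: (hL j hj) => hl _; have := hl 1 0 0; rewrite scale1r addr0 scale1r.
    by move=> /(congr1 (fun z => z - L j 0)); rewrite subrr addrK.
  have Ls0 : Ls j 0 = 0.
    apply: (hnorm_eq0 hipH); apply/eqP; rewrite -sqrf_eq0 hnorm_sq //.
    by rewrite -hadj // (ip0r (hipj j hj)).
  by rewrite P0 L0 Ls0 P0 scaler0.
have [sJ hsJ] := hJs f.
have [x hx] := has_sumV_sub hipH hcomp hIJ hsJ.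
have hIcJ : forall j, Ic j -> J j by move=> j [].
have [y hy] := has_sumV_sub hipH hcomp hIcJ hsJ.
have ex : S_K ipH P L Ls v I f = x by rewrite /S_K; exact: (sumV_eq hipH hx).
have ey : S_K ipH P L Ls v Ic f = y by rewrite /S_K; exact: (sumV_eq hipH hy).
have hxy : has_sumV ipH J (uu P L Ls v f) (x + y).
  apply: (has_sumV_split hipH (I := I) (Ic := Ic)) => //.
    move=> j; split.
      by move=> hj; case: (excluded_middle_informative (I j)) => h; [left|right].
    by case=> [/hIJ|[]].
  by move=> j h [_ n].
have eS : S_K ipH P L Ls v J f = x + y by rewrite /S_K; exact: (sumV_eq hipH hxy).
have sI : sumR I (fun j => v j ^+ 2 * hnorm (@ipj j) (L j (P j f)) ^+ 2)
    = complex.Re (ipH x f).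
  exact: (sumR_eq (hsR hipH hipj hP hadj hIJ hx)).
have sIc : sumR Ic (fun j => v j ^+ 2 * hnorm (@ipj j) (L j (P j f)) ^+ 2)
    = complex.Re (ipH y f).
  exact: (sumR_eq (hsR hipH hipj hP hadj hIcJ hy)).
rewrite sI sIc ex ey.
have QZ : forall a z, Q (a *: z) = a *: Q z.
  by move=> a z; rewrite -[a *: z]addr0 hQlin Q0 addr0.
have SA : forall a b, complex.Re (ipH (Q a) b) = complex.Re (ipH a (Q b)).
  move=> a b; have h1 := ger0_Im (hQpos (a + 'i%C *: b)).
  rewrite QD QZ !(ipDl hipH) !(ipDr hipH) !(ipZl hipH) !(ipZr hipH) !raddfD /= in h1.
  rewrite Im_iM Im_ciM Im_iciM (ger0_Im (hQpos a)) (ger0_Im (hQpos b)) in h1.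
  rewrite (Re_ipC hipH a); lra.
set p := Qi x; set q := Qi y.
have hQf : Q f = p + q.
  by rewrite -(hQiQ (Q f)) hQQ eS -(hQQi x) -(hQQi y) -QD hQiQ.
have -> : complex.Re (ipH x f) = complex.Re (ipH p p) + complex.Re (ipH p q).
  by rewrite -{1}(hQQi x) SA hQf (ipDr hipH) raddfD.
have -> : complex.Re (ipH y f) = complex.Re (ipH q p) + complex.Re (ipH q q).
  by rewrite -{1}(hQQi y) SA hQf (ipDr hipH) raddfD.
rewrite !(hnorm_sq hipH) (Re_ipC hipH p q); lra.
Qed.
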